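(* Let $G=(V,E)$ be an undirected graph, $k$ a positive integer, $S\subseteq V$, and $m_{\overline S}:V-S\to\mathbb{Z}$ an in-degree specification on $V-S$. Define $h:2^S\to\mathbb{Z}\cup\{-\infty\}$ by $h(\emptyset)=0$, $h(S)=|E|-\widetilde m_{\overline S}(V-S)$, and $h(Z)=\max\{k+i_G(Z\cup X)-\widetilde m_{\overline S}(X):X\subseteq V-S\}$ for $\emptyset\subset Z\subset S$, and let $B_S=\{x\in\mathbb{R}^S:\widetilde x(S)=h(S),\ \widetilde x(Z)\ge h(Z)\ \forall Z\subset S\}$. Then the set of in-degree vectors of those orientations $D$ of $G$ which are locally $k$-edge-connected in $S$ and satisfy $\varrho_D(v)=m_{\overline S}(v)$ for all $v\in V-S$ is an M-convex set, namely it equals $\{(m_S,m_{\overline S}): m_S\in B_S\cap\mathbb{Z}^S\}$.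
   Context: $i_G(Y)$ is the number of edges with both end-nodes in $Y$; $\widetilde x(Z)=\sum_{v\in Z}x(v)$; $\varrho_D(v)$ is the number of arcs with head $v$. A digraph $D$ on $V$ is locally $k$-edge-connected in $S$ if for any two distinct nodes $s,t\in S$ there are $k$ arc-disjoint directed paths from $s$ to $t$ (equivalently, $\varrho_D(X)\ge k$ for every $X\subset V$ with $X\cap S$ and $S-X$ non-empty). An M-convex set is the set of integral points of an integral base-polyhedron. *)

(* Defs.v *)
From HB Require Import structures.
From mathcomp Require Import all_boot all_order all_algebra.
Set Implicit Arguments. Unset Strict Implicit. Unset Printing Implicit Defensive.
Import Order.TTheory GRing.Theory Num.Theory.
Local Open Scope ring_scope.

(* An orientation is a boolean per edge:
   true orients e = (u,w) as u -> w, false as w -> u. *)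

Section Graph.
Variables (V E : finType) (ends : E -> V * V).

Definition head (o : {ffun E -> bool}) (e : E) : V :=
  if o e then (ends e).2 else (ends e).1.
Definition tail (o : {ffun E -> bool}) (e : E) : V :=
  if o e then (ends e).1 else (ends e).2.

Definition indeg (o : {ffun E -> bool}) (v : V) : nat :=
  #|[set e | head o e == v]|.

Definition rho (o : {ffun E -> bool}) (X : {set V}) : nat :=
  #|[set e | (head o e \in X) && (tail o e \notin X)]|.

Definition loc_kec (o : {ffun E -> bool}) (S : {set V}) (k : nat) : Prop :=
  forall X : {set V}, X :&: S != set0 -> S :\: X != set0 -> (k <= rho o X)%N.

Definition iG (Y : {set V}) : nat :=
  #|[set e | ((ends e).1 \in Y) && ((ends e).2 \in Y)]|.

(* the function h : 2^S -> Z (the max is over a nonempty family, X = set0) *)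
Definition hS (k : nat) (S : {set V}) (msb : V -> int) (Z : {set V}) : int :=
  if Z == set0 then 0
  else if Z == S then (#|E|%:Z - \sum_(v in ~: S) msb v)
  else \big[Num.max/(k%:Z + (iG Z)%:Z)]_(X : {set V} | X \subset ~: S)
          (k%:Z + (iG (Z :|: X))%:Z - \sum_(v in X) msb v).

(* integral points of B_S (only the coordinates in S matter) *)
Definition in_BS_int (k : nat) (S : {set V}) (msb : V -> int) (x : V -> int) : Prop :=
  \sum_(v in S) x v = hS k S msb S /\
  forall Z : {set V}, Z \proper S -> hS k S msb Z <= \sum_(v in Z) x v.

Definition indeg_vectors (k : nat) (S : {set V}) (msb : V -> int) (m : V -> int) : Prop :=
  exists o : {ffun E -> bool},
    [/\ loc_kec o S k,
        (forall v, v \notin S -> (indeg o v)%:Z = msb v) &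
        (forall v, m v = (indeg o v)%:Z)].
End Graph.

(* M-convex sets: integral points of an integral base-polyhedron
   B'(p) = {x : x(Z) >= p(Z) for all Z, x(T) = p(T)} with
   p : 2^T -> Z u {-oo} fully supermodular (None encodes -oo). *)
Section MConvex.
Variable T : finType.

Definition fully_supermodular (p : {set T} -> option int) : Prop :=
  [/\ p set0 = Some 0,
      p setT <> None &
      forall (X Y : {set T}) (a b : int), p X = Some a -> p Y = Some b ->
        exists c d : int, [/\ p (X :&: Y) = Some c, p (X :|: Y) = Some d &
                              a + b <= c + d]].

Definition base_int_points (p : {set T} -> option int) (x : T -> int) : Prop :=
  p setT = Some (\sum_(t in T) x t) /\
  forall (Z : {set T}) (a : int), p Z = Some a -> a <= \sum_(t in Z) x t.

Definition Mconvex (M : (T -> int) -> Prop) : Prop :=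
  exists p, fully_supermodular p /\ forall x, M x <-> base_int_points p x.
End MConvex.

(* Main.v *)
Require Import Defs.
From HB Require Import structures.
From mathcomp Require Import all_boot all_order all_algebra zify.
Set Implicit Arguments. Unset Strict Implicit. Unset Printing Implicit Defensive.
Import Order.TTheory GRing.Theory Num.Theory.
Local Open Scope ring_scope.

Section Basic.
Variables (V E : finType) (ends : E -> V * V).

Lemma card_setP (T : finType) (P : pred T) : #|[set e | P e]| = (\sum_(e : T) (P e : nat))%N.
Proof.
rewrite -sum1_card big_mkcond /=; apply: eq_bigr => i _; rewrite inE; by case: (P i).
Qed.

Lemma sum_ind_in (T : finType) (Y : {set T}) (t : T) :
  (\sum_(v in Y) ((t == v) : nat))%N = (t \in Y : nat).
Proof.
case: (boolP (t \in Y)) => h.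
  rewrite (bigD1 t) //= eqxx big1 // => i /andP [_ hi]; by rewrite eq_sym (negbTE hi).
by rewrite big1 // => i hi; case: eqP => // ?; subst; rewrite hi in h.
Qed.

Lemma sumIU_int (T : finType) (f : T -> int) (A B : {set T}) :
  \sum_(v in A :&: B) f v + \sum_(v in A :|: B) f v = \sum_(v in A) f v + \sum_(v in B) f v.
Proof.
rewrite !(big_mkcond (fun v => v \in _)) -!big_split /=; apply: eq_bigr => v _.
rewrite !inE; case: (v \in A); case: (v \in B) => /=; rewrite ?addr0 ?add0r //; exact: addrC.
Qed.

Lemma sumIU_nat (T : finType) (f : T -> nat) (A B : {set T}) :
  (\sum_(v in A :&: B) f v + \sum_(v in A :|: B) f v = \sum_(v in A) f v + \sum_(v in B) f v)%N.
Proof.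
rewrite !(big_mkcond (fun v => v \in _)) -!big_split /=; apply: eq_bigr => v _.
rewrite !inE; case: (v \in A); case: (v \in B) => /=; rewrite ?addn0 ?add0n //; exact: addnC.
Qed.

Lemma indegE o v : indeg ends o v = (\sum_e ((Defs.head ends o e == v) : nat))%N.
Proof. by rewrite /indeg card_setP. Qed.

Lemma sum_indeg o (Y : {set V}) :
  (\sum_(v in Y) indeg ends o v = \sum_e ((Defs.head ends o e \in Y) : nat))%N.
Proof.
under eq_bigr do rewrite indegE.
rewrite exchange_big /=; apply: eq_bigr => e _; exact: sum_ind_in.
Qed.

Lemma sum_indeg_all o : (\sum_v indeg ends o v)%N = #|E|.
Proof.
have -> : (\sum_v indeg ends o v = \sum_(v in [set: V]) indeg ends o v)%N by apply: eq_bigl => v; rewrite inE.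
by rewrite sum_indeg -sum1_card; apply: eq_bigr => e _; rewrite inE.
Qed.

Lemma iGE (Y : {set V}) : iG ends Y = (\sum_e ((((ends e).1 \in Y) && ((ends e).2 \in Y)) : nat))%N.
Proof. by rewrite /iG card_setP. Qed.

Lemma rhoE o (Y : {set V}) : rho ends o Y = (\sum_e (((Defs.head ends o e \in Y) && (tail ends o e \notin Y)) : nat))%N.
Proof. by rewrite /rho card_setP. Qed.

Lemma indeg_split o (Y : {set V}) :
  (\sum_(v in Y) indeg ends o v = iG ends Y + rho ends o Y)%N.
Proof.
rewrite sum_indeg iGE rhoE -big_split /=; apply: eq_bigr => e _.
rewrite /Defs.head /Defs.tail; case: (o e); case: ((ends e).1 \in Y); case: ((ends e).2 \in Y) => //.
Qed.

End Basic.
Section Hakimi.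
Variables (V E : finType) (ends : E -> V * V).

Definition indegF (F : {set E}) (o : {ffun E -> bool}) v :=
  (\sum_(e in F) ((Defs.head ends o e == v) : nat))%N.
Definition iF (F : {set E}) (Y : {set V}) :=
  (\sum_(e in F) ((((ends e).1 \in Y) && ((ends e).2 \in Y)) : nat))%N.

Lemma sum_sub_ind (m : V -> int) (b : V) (Y : {set V}) :
  \sum_(v in Y) (m v - (v == b)%:R) = \sum_(v in Y) m v - (b \in Y)%:R.
Proof.
rewrite sumrB; congr (_ - _).
rewrite -natr_sum; congr (_%:R).
rewrite -(sum_ind_in Y b); apply: eq_bigr => v _; by rewrite eq_sym.
Qed.

Lemma sum_sub_indT (m : V -> int) (b : V) :
  \sum_v (m v - (v == b)%:R) = \sum_v m v - 1.
Proof.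
have h : forall f : V -> int, \sum_v f v = \sum_(v in [set: V]) f v.
  by move=> f; apply: eq_bigl => v; rewrite inE.
by rewrite !h sum_sub_ind inE.
Qed.

Lemma iF_super (F : {set E}) e (Y1 Y2 : {set V}) :
  e \in F -> (ends e).2 \in Y1 -> (ends e).1 \notin Y1 ->
  (ends e).1 \in Y2 -> (ends e).2 \notin Y2 ->
  (iF F Y1 + iF F Y2 < iF F (Y1 :&: Y2) + iF F (Y1 :|: Y2))%N.
Proof.
move=> eF b1 a1 a2 b2.
rewrite /iF -!big_split /= (bigD1 e eF) [X in (_ < X)%N](bigD1 e eF) /=.
rewrite !inE (negbTE a1) (negbTE b2) b1 a2 /= /=.
rewrite ltnS; apply: leq_sum => x _; rewrite !inE.
by case: ((ends x).1 \in Y1); case: ((ends x).2 \in Y1); case: ((ends x).1 \in Y2); case: ((ends x).2 \in Y2).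
Qed.

Lemma hakimi_gen n : forall (F : {set E}), #|F| = n -> forall m : V -> int,
  \sum_v m v = (#|F|)%:Z -> (forall Y, ((iF F Y)%:Z <= \sum_(v in Y) m v)) ->
  exists o, forall v, (indegF F o v)%:Z = m v.
Proof.
elim: n => [|n IH] F hF m hsum hY.
  exists [ffun=> true] => v.
  have h0 : forall v, 0 <= m v.
    move=> w; have := hY [set w]; rewrite big_set1; apply: le_trans.
    by [].
  rewrite /indegF (_ : F = set0); last by apply/eqP; rewrite -cards_eq0 hF.
  rewrite big_set0 hF in hsum *.
  apply/eqP; rewrite eq_sym; apply/eqP.
  move: hsum; rewrite (bigD1 v) //= => /eqP; rewrite paddr_eq0 //.
    by case/andP => /eqP.
  by apply: sumr_ge0 => i _.
have [e eF] : exists e, e \in F.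
  by apply/set0Pn; rewrite -cards_eq0 hF.
set F' := F :\ e.
have hF' : #|F'| = n by move: hF; rewrite (cardsD1 e F) eF add1n => -[].
have iFE : forall Y, iF F Y = (iF F' Y + ((((ends e).1 \in Y) && ((ends e).2 \in Y)) : nat))%N.
  by move=> Y; rewrite /iF (bigD1 e eF) addnC; congr (_ + _)%N; apply: eq_bigl => x; rewrite !inE andbC.
have indE : forall (o' : {ffun E -> bool}) (b : bool) v,
    indegF F [ffun x => if x == e then b else o' x] v =
    (indegF F' o' v + ((Defs.head ends [ffun x => if x == e then b else o' x] e == v) : nat))%N.
  move=> o' b v; rewrite /indegF (bigD1 e eF) addnC; congr (_ + _)%N.
  apply: eq_big => x; first by rewrite !inE andbC.
  move=> /andP [_ hx]; by rewrite /Defs.head ffunE (negbTE hx).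
have trysol : forall (b : bool) (c : V),
   c = (if b then (ends e).2 else (ends e).1) ->
   (forall Y, ((iF F' Y)%:Z <= \sum_(v in Y) (m v - (v == c)%:R))) ->
   exists o, forall v, (indegF F o v)%:Z = m v.
  move=> b c hc hYc.
  have [o' ho'] := IH F' hF' (fun v => m v - (v == c)%:R)
    ltac:(by rewrite sum_sub_indT hsum hF hF' -addn1 PoszD addrK) hYc.
  exists [ffun x => if x == e then b else o' x] => v.
  rewrite indE PoszD ho' /Defs.head ffunE eqxx -hc.
  by rewrite eq_sym; case: (c == v); rewrite ?subr0 ?addr0 /= ?subrK // PoszD subrK.
have [h1|h1] := boolP [forall Y : {set V}, ((iF F' Y)%:Z <= \sum_(v in Y) (m v - (v == (ends e).2)%:R))].
  by apply: (trysol true) => // Y; move/forallP: h1; apply.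
have [h2|h2] := boolP [forall Y : {set V}, ((iF F' Y)%:Z <= \sum_(v in Y) (m v - (v == (ends e).1)%:R))].
  by apply: (trysol false) => // Y; move/forallP: h2; apply.
exfalso.
move/forallPn: h1 => [Y1]; rewrite -ltNge sum_sub_ind => h1.
move/forallPn: h2 => [Y2]; rewrite -ltNge sum_sub_ind => h2.
have t1 := hY Y1; have t2 := hY Y2.
rewrite iFE in t1; rewrite iFE in t2.
have b1 : (ends e).2 \in Y1.
  apply/negPn/negP => hb; move: h1 t1; rewrite (negbTE hb) andbF /= addn0; lia.
have a1 : (ends e).1 \notin Y1.
  apply/negP => ha; move: h1 t1; rewrite ha b1 /=; lia.
have a2 : (ends e).1 \in Y2.
  apply/negPn/negP => hb; move: h2 t2; rewrite (negbTE hb) /= addn0; lia.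
have b2 : (ends e).2 \notin Y2.
  apply/negP => ha; move: h2 t2; rewrite ha a2 /=; lia.
have := iF_super eF b1 a1 a2 b2.
have e1 := iFE Y1; have e2 := iFE Y2.
rewrite (negbTE a1) /= in e1; rewrite (negbTE b2) andbF in e2.
have t3 := hY (Y1 :&: Y2); have t4 := hY (Y1 :|: Y2).
have := sumIU_int m Y1 Y2.
move: e1 e2 h1 h2 t1 t2 t3 t4; rewrite (negbTE a1) (negbTE b2) b1 a2 /= !addn0.
move: (iF F Y1) (iF F Y2) (iF F (Y1 :&: Y2)) (iF F (Y1 :|: Y2)) (iF F' Y1) (iF F' Y2) => *.
lia.
Qed.

Lemma hakimi (m : V -> int) :
  \sum_v m v = (#|E|)%:Z -> (forall Y, ((iG ends Y)%:Z <= \sum_(v in Y) m v)) ->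
  exists o, forall v, (indeg ends o v)%:Z = m v.
Proof.
move=> hs hY.
have h1 : \sum_v m v = (#|[set: E]|)%:Z by rewrite hs cardsT.
have h2 : forall Y, ((iF [set: E] Y)%:Z <= \sum_(v in Y) m v).
  move=> Y; rewrite (_ : iF _ _ = iG ends Y) ?hY // /iF iGE; apply: eq_bigl => x; by rewrite inE.
have [o ho] := @hakimi_gen _ [set: E] erefl m h1 h2.
exists o => v; rewrite -ho indegE /indegF; congr (Posz _); apply: eq_bigl => x; by rewrite inE.
Qed.

End Hakimi.

Section Abstract.
Variables (V E : finType) (ends : E -> V * V) (k : nat) (S : {set V}) (msb : V -> int).

Local Notation h := (hS ends k S msb).
Local Notation Bp := (in_BS_int ends k S msb).

Lemma hS_mid (Z : {set V}) : Z != set0 -> Z != S ->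
  h Z = \big[Num.max/(k%:Z + (iG ends Z)%:Z)]_(X : {set V} | X \subset ~: S)
          (k%:Z + (iG ends (Z :|: X))%:Z - \sum_(v in X) msb v).
Proof. by move=> h1 h2; rewrite /hS (negbTE h1) (negbTE h2). Qed.

Lemma hS_attain (Z : {set V}) : Z != set0 -> Z != S ->
  exists X : {set V}, X \subset ~: S /\ h Z = k%:Z + (iG ends (Z :|: X))%:Z - \sum_(v in X) msb v.
Proof.
move=> h1 h2; rewrite hS_mid //.
apply: (big_ind (fun y => exists X : {set V}, X \subset ~: S /\ y = k%:Z + (iG ends (Z :|: X))%:Z - \sum_(v in X) msb v)).
- by exists set0; rewrite sub0set setU0 big_set0 subr0.
- move=> a b [Xa [ha ea]] [Xb [hb eb]].
  rewrite /Num.max; case: ifP => _; [by exists Xb| by exists Xa].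
- by move=> X hX; exists X.
Qed.

Lemma le_hS (Z X : {set V}) : Z != set0 -> Z != S -> X \subset ~: S ->
  k%:Z + (iG ends (Z :|: X))%:Z - \sum_(v in X) msb v <= h Z.
Proof. by move=> h1 h2 hX; rewrite hS_mid //; apply: le_bigmax_cond. Qed.

Lemma hS_le (Z : {set V}) (c : int) : Z != set0 -> Z != S ->
  (forall X : {set V}, X \subset ~: S -> k%:Z + (iG ends (Z :|: X))%:Z - \sum_(v in X) msb v <= c) ->
  h Z <= c.
Proof.
move=> h1 h2 hX; rewrite hS_mid //; apply: bigmax_le.
  by have := hX set0 (sub0set _); rewrite setU0 big_set0 subr0.
by move=> X; apply: hX.
Qed.

Lemma iG_super (A B : {set V}) :
  (iG ends A + iG ends B <= iG ends (A :&: B) + iG ends (A :|: B))%N.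
Proof.
rewrite !iGE -!big_split /=; apply: leq_sum => x _; rewrite !inE.
by case: ((ends x).1 \in A); case: ((ends x).2 \in A); case: ((ends x).1 \in B); case: ((ends x).2 \in B).
Qed.

Lemma arith_cross (g i j l : nat) (a b c d e f : int) :
  (k%:Z + j%:Z - c <= e) -> (k%:Z + l%:Z - d <= f) -> (g + i <= j + l)%N -> c + d = a + b ->
  k%:Z + g%:Z - a + (k%:Z + i%:Z - b) <= e + f.
Proof. move=> *. lia. Qed.

Lemma hS_cross (T0 T1 : {set V}) : T0 \proper S -> T1 \proper S ->
  T0 :&: T1 != set0 -> T0 :|: T1 != S ->
  h T0 + h T1 <= h (T0 :&: T1) + h (T0 :|: T1).
Proof.
move=> p0 p1 n01 u01.
have s0 : T0 \subset S by case/andP: p0.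
have s1 : T1 \subset S by case/andP: p1.
have ne0 : T0 != set0.
  by apply: contraNneq n01 => ->; rewrite set0I.
have ne1 : T1 != set0.
  by apply: contraNneq n01 => ->; rewrite setI0.
have neS0 : T0 != S by move: p0; rewrite properEneq => /andP [].
have neS1 : T1 != S by move: p1; rewrite properEneq => /andP [].
have neSI : T0 :&: T1 != S.
  apply: contraNneq neS0 => e; apply/eqP; apply/setP => v; apply/idP/idP.
    by move/(subsetP s0).
  by rewrite -e inE => /andP [].
have neU : T0 :|: T1 != set0.
  case/set0Pn: n01 => v; rewrite !inE => /andP [hv _]; apply/set0Pn; exists v; by rewrite inE hv.
have [X0 [hX0 e0]] := hS_attain ne0 neS0.
have [X1 [hX1 e1]] := hS_attain ne1 neS1.
rewrite e0 e1.
have eI : (T0 :|: X0) :&: (T1 :|: X1) = (T0 :&: T1) :|: (X0 :&: X1).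
  apply/setP => v; rewrite !inE.
  case: (boolP (v \in S)) => hv.
    have -> : (v \in X0) = false by apply/negbTE/negP => /(subsetP hX0); rewrite inE hv.
    have -> : (v \in X1) = false by apply/negbTE/negP => /(subsetP hX1); rewrite inE hv.
    by rewrite !orbF.
  have -> : (v \in T0) = false by apply/negbTE/negP => /(subsetP s0); rewrite (negbTE hv).
  have -> : (v \in T1) = false by apply/negbTE/negP => /(subsetP s1); rewrite (negbTE hv).
  by [].
have eU : (T0 :|: X0) :|: (T1 :|: X1) = (T0 :|: T1) :|: (X0 :|: X1).
  by rewrite setUACA.
have l1 := le_hS n01 neSI (subset_trans (subsetIl X0 X1) hX0).
have hX01 : X0 :|: X1 \subset ~: S by rewrite subUset hX0 hX1.
have l2 := le_hS neU u01 hX01.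
have sup := iG_super (T0 :|: X0) (T1 :|: X1).
rewrite eI eU in sup.
have m := sumIU_int msb X0 X1.
move: l1 l2 sup m.
move: (iG ends (T0 :|: X0)) (iG ends (T1 :|: X1)) (iG ends (T0 :&: T1 :|: X0 :&: X1)) (iG ends (T0 :|: T1 :|: (X0 :|: X1))).
move: (h (T0 :&: T1)) (h (T0 :|: T1)).
move: (\sum_(v in X0) msb v) (\sum_(v in X1) msb v) (\sum_(v in X0 :&: X1) msb v) (\sum_(v in X0 :|: X1) msb v).
move=> a b c d e f g i j l; exact: arith_cross.
Qed.


Lemma sumD_int (f : V -> int) (A B : {set V}) : B \subset A ->
  \sum_(v in A :\: B) f v = \sum_(v in A) f v - \sum_(v in B) f v.
Proof.
move=> hB; rewrite [X in _ = X - _](big_setID B) /= (setIidPr hB).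
by rewrite addrC addrK.
Qed.

Definition mv (x : V -> int) u w := fun v => x v - (v == u)%:R + (v == w)%:R.

Lemma sum_ind_int (Z : {set V}) w : \sum_(v in Z) ((v == w)%:R : int) = (w \in Z)%:R.
Proof.
rewrite -natr_sum -(sum_ind_in Z w); congr (_%:R); apply: eq_bigr => v _; by rewrite eq_sym.
Qed.

Lemma sum_mv x u w (Z : {set V}) :
  \sum_(v in Z) mv x u w v = \sum_(v in Z) x v - (u \in Z)%:R + (w \in Z)%:R.
Proof. by rewrite /mv big_split /= sum_sub_ind sum_ind_int. Qed.

Lemma arith_tight (a0 a1 aI aU b0 b1 bI bU : int) :
  b0 + b1 <= bI + bU -> a0 = b0 -> a1 = b1 -> aI + aU = a0 + a1 -> bI <= aI -> bU <= aU -> aI = bI.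
Proof. move=> *; lia. Qed.

Lemma tightI x (T0 T1 : {set V}) : Bp x -> T0 \proper S -> T1 \proper S ->
  \sum_(v in T0) x v = h T0 -> \sum_(v in T1) x v = h T1 ->
  T0 :&: T1 != set0 -> T0 :|: T1 != S ->
  \sum_(v in T0 :&: T1) x v = h (T0 :&: T1).
Proof.
move=> [_ Bx] p0 p1 t0 t1 n01 u01.
have c := hS_cross p0 p1 n01 u01.
have pI : T0 :&: T1 \proper S by apply: sub_proper_trans (subsetIl _ _) p0.
have pU : T0 :|: T1 \proper S.
  by rewrite properEneq u01 subUset; case/andP: p0 => -> _; case/andP: p1 => -> _.
exact: (arith_tight c t0 t1 (sumIU_int x T0 T1) (Bx _ pI) (Bx _ pU)).
Qed.

Lemma arith_C (dx dz sx tx tz hs ht : int) :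
  dx <= dz -> sx = hs -> tx = ht -> ht <= tz -> dx - (sx - tx) <= dz - (hs - tz).
Proof. move=> *; lia. Qed.

Lemma inter_min x z u : Bp x -> Bp z -> forall n (F : {set {set V}}), (#|F| <= n)%N -> F != set0 ->
  (forall T, T \in F -> [/\ T \proper S, u \in T & \sum_(v in T) x v = h T]) ->
  \sum_(v in \bigcap_(T in F) T) x v <= \sum_(v in \bigcap_(T in F) T) z v.
Proof.
move=> Bx Bz; elim=> [|n IH] F hn hF0 hF.
  by move: hn; rewrite leqn0 cards_eq0 (negbTE hF0).
case/set0Pn: (hF0) => T0 T0F.
have [p0 u0 t0] := hF T0 T0F.
case: (boolP (F :\ T0 == set0)) => hF1.
  have -> : F = [set T0].
    apply/setP => T; rewrite inE; apply/idP/eqP => [TF|->//].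
    apply/eqP; apply/negPn/negP => hT; move/eqP: hF1 => /setP /(_ T); rewrite !inE hT TF.
    by [].
  rewrite big_set1 t0; case: Bz => _; exact.
case: (boolP [exists T1 in F :\ T0, T0 :|: T1 != S]) => hex.
  case/existsP: hex => T1 /andP [T1F u01].
  move: (T1F); rewrite !inE => /andP [n10 T1F'].
  have [p1 u1 t1] := hF T1 T1F'.
  have n01 : T0 :&: T1 != set0 by apply/set0Pn; exists u; rewrite inE u0 u1.
  set F' := (T0 :&: T1) |: ((F :\ T0) :\ T1).
  have eq : \bigcap_(T in F') T = \bigcap_(T in F) T.
    apply/setP => v; apply/bigcapP/bigcapP => H T hT.
      have hI := H (T0 :&: T1) (setU11 _ _); rewrite inE in hI; case/andP: hI => v0 v1.
      case: (boolP (T == T0)) => [/eqP -> //|nT0].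
      case: (boolP (T == T1)) => [/eqP -> //|nT1].
      by apply: H; rewrite !inE nT0 nT1 hT orbT.
    move: hT; rewrite !inE => /orP [/eqP ->|/andP [_ /andP [_ TF]]].
      by rewrite inE (H _ T0F) (H _ T1F').
    exact: H.
  rewrite -eq; apply: IH.
  - have c1 := cardsD1 T0 F; have c2 := cardsD1 T1 (F :\ T0).
    have c3 : (#|F'| <= 1 + #|F :\ T0 :\ T1|)%N by rewrite cardsU1 leq_add2r leq_b1.
    rewrite T0F in c1; rewrite T1F in c2.
    move: c1 c2 c3 hn; move: #|F'| #|F| #|F :\ T0| #|F :\ T0 :\ T1| => a b c d /=.
    clear; lia.
  - by apply/set0Pn; exists (T0 :&: T1); exact: setU11.
  - move=> T; rewrite !inE => /orP [/eqP ->|/andP [_ /andP [_ TF]]]; last exact: hF.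
    split.
    + exact: sub_proper_trans (subsetIl _ _) p0.
    + by rewrite inE u0 u1.
    + exact: tightI.
have hall : forall T1, T1 \in F -> T1 != T0 -> T0 :|: T1 = S.
  move/existsPn: hex => H T1 T1F n10; move: (H T1); rewrite !inE n10 T1F /= negbK.
  by move/eqP.
set D' := \bigcap_(T in F :\ T0) T.
have eqD : \bigcap_(T in F) T = T0 :&: D'.
  rewrite (bigD1 T0 T0F) /=; congr (_ :&: _); apply: eq_bigl => T; by rewrite !inE andbC.
have hn' : (#|F :\ T0| <= n)%N.
  have c1 := cardsD1 T0 F; rewrite T0F in c1; move: c1 hn; move: #|F| #|F :\ T0| => a b /=; clear; lia.
have IH' := IH (F :\ T0) hn' hF1 (fun T hT => hF T (elimT setD1P hT).2).
rewrite -/D' in IH'.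
have DS : D' \subset S.
  case/set0Pn: hF1 => T1 T1F; apply: subset_trans (bigcap_inf T1 T1F) _.
  have [p _ _] := hF T1 (elimT setD1P T1F).2; by case/andP: p.
have SD : S :\: T0 \subset D'.
  apply/subsetP => v; rewrite inE => /andP [nv vS]; apply/bigcapP => T.
  rewrite in_setD1 => /andP [nT TF]; have := hall T TF nT; move/setP/(_ v).
  rewrite inE (negbTE nv) vS /= => e; by rewrite e.
have T0S : T0 \subset S by case/andP: p0.
have split : forall f : V -> int, \sum_(v in D') f v =
     \sum_(v in T0 :&: D') f v + (\sum_(v in S) f v - \sum_(v in T0) f v).
  move=> f; rewrite (big_setID T0) /= setIC -sumD_int //; congr (_ + _).
  apply: eq_bigl => v; rewrite !inE; case: (boolP (v \in T0)) => //= nv.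
  apply/idP/idP => [/(subsetP DS) //| vS]; apply: (subsetP SD); by rewrite inE nv vS.
rewrite eqD.
have ex : forall f : V -> int, \sum_(v in T0 :&: D') f v = \sum_(v in D') f v - (\sum_(v in S) f v - \sum_(v in T0) f v).
  by move=> f; rewrite split addrK.
rewrite !ex.
case: Bx => Sx _; case: Bz => Sz Bz2.
rewrite Sz; apply: arith_C => //; rewrite t0; exact: Bz2.
Qed.

Lemma arith_ex (s hz : int) (bu bw : bool) :
  s - bu%:R + bw%:R < hz -> hz <= s -> [&& bu, ~~ bw & s == hz].
Proof. case: bu; case: bw => /= *; apply/eqP; lia. Qed.

Lemma exchange x z u : Bp x -> Bp z -> u \in S -> z u < x u ->
  exists w, [/\ w \in S, x w < z w & Bp (mv x u w)].
Proof.
move=> Bx Bz uS lt.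
case: (boolP [exists w, [&& w \in S, x w < z w &
   [forall Z : {set V}, (Z \proper S) ==> (h Z <= \sum_(v in Z) mv x u w v)]]]) => hex.
  case/existsP: hex => w /and3P [wS lw /forallP H]; exists w; split => //; split.
    by rewrite sum_mv uS wS Bx.1 subrK.
  move=> Z pZ; exact: (implyP (H Z) pZ).
exfalso.
set N := [set w in S | x w < z w].
case: (boolP (N == set0)) => hN.
  have : \sum_(v in S) z v < \sum_(v in S) x v.
    rewrite (bigD1 u uS) [X in _ < X](bigD1 u uS) /=; apply: ltr_leD => //.
    apply: ler_sum => v /andP [vS _]; rewrite leNgt; apply/negP => hv.
    have : v \in N by rewrite inE hv andbT.
    by rewrite (eqP hN) inE.
  by rewrite Bx.1 Bz.1 ltxx.
set Fam := [set T : {set V} | [&& T \proper S, u \in T & \sum_(v in T) x v == h T]].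
have key : forall w, w \in N -> exists2 T, T \in Fam & w \notin T.
  move=> w; rewrite inE => /andP [wS lw].
  move/existsPn: hex => /(_ w); rewrite wS lw /= => /forallPn [Z].
  rewrite negb_imply => /andP [pZ]; rewrite -ltNge sum_mv => lt2.
  have le2 := Bx.2 Z pZ.
  have /and3P [a b c] := arith_ex lt2 le2.
  by exists Z => //; rewrite inE pZ a c.
have Fne : Fam != set0.
  case/set0Pn: hN => w0 w0N; have [T TF _] := key w0 w0N; apply/set0Pn; by exists T.
have hFam : forall T, T \in Fam -> [/\ T \proper S, u \in T & \sum_(v in T) x v = h T].
  move=> T; rewrite inE => /and3P [a b /eqP c]; by split.
have im := inter_min Bx Bz (leqnn #|Fam|) Fne hFam.
set D := \bigcap_(T in Fam) T in im.
have uD : u \in D by apply/bigcapP => T /hFam [].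
have zx : forall v, v \in D -> z v <= x v.
  move=> v vD; rewrite leNgt; apply/negP => hv.
  have vS : v \in S.
    case/set0Pn: Fne => T TF; have [p _ _] := hFam T TF.
    case/andP: p => sTS _; apply: (subsetP sTS); by move/bigcapP: vD; apply.
  have vN : v \in N by rewrite inE vS hv.
  have [T TF nT] := key v vN.
  by move/bigcapP: vD => /(_ T TF); rewrite (negbTE nT).
have : \sum_(v in D) z v < \sum_(v in D) x v.
  rewrite (bigD1 u uD) [X in _ < X](bigD1 u uD) /=; apply: ltr_leD => //.
  by apply: ler_sum => v /andP [vD _]; apply: zx.
by rewrite ltNge im.
Qed.

Definition dist x z := (\sum_(v in S) absz (x v - z v))%N.

Lemma dist_step x z w u' : x w < z w -> z u' < x u' -> w \in S ->
  (dist x (mv z w u') < dist x z)%N.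
Proof.
move=> l1 l2 wS; rewrite /dist (bigD1 w wS) [X in (_ < X)%N](bigD1 w wS) /=.
have nwu : w != u' by apply/eqP => e; move: l1 l2; rewrite e => a b; move: (lt_trans a b); rewrite ltxx.
rewrite -addSn; apply: leq_add.
  rewrite /mv eqxx (negbTE nwu) /=; move: l1; move: (x w) (z w) => a b l; lia.
apply: leq_sum => v /andP [_ nvw]; rewrite /mv (negbTE nvw) /=.
case: (boolP (v == u')) => [/eqP e|_] /=.
  rewrite e; move: l2; move: (x u') (z u') => a b l; lia.
by rewrite subr0 addr0.
Qed.

Lemma local_global x (C : {set V}) : C \subset S -> Bp x ->
  (forall u w, u \in C -> w \in S -> w \notin C -> ~ Bp (mv x u w)) ->
  forall z, Bp z -> \sum_(v in C) x v <= \sum_(v in C) z v.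
Proof.
move=> CS Bx loc z Bz.
move: (leqnn (dist x z)); move: {2}(dist x z) => n.
elim: n z Bz => [|n IH] z Bz hd.
  apply: ler_sum => v vC; have vS := subsetP CS v vC.
  have : (absz (x v - z v) <= dist x z)%N by rewrite /dist (bigD1 v vS) /= leq_addr.
  move/leq_trans/(_ hd); rewrite leqn0 absz_eq0 subr_eq0 => /eqP ->.
  by [].
rewrite leNgt; apply/negP => lt.
case: (boolP [exists w in C, x w < z w]) => hw.
  case/exists_inP: hw => w wC lw.
  have wS := subsetP CS w wC.
  have [u' [u'S lu' Bz']] := exchange Bz Bx wS lw.
  have dlt := dist_step lw lu' wS.
  have := IH (mv z w u') Bz' (leq_trans dlt hd).
  rewrite sum_mv wC; move: lt; move: (\sum_(v in C) x v) (\sum_(v in C) z v) (u' \in C) => a b c.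
  by case: c => /= *; lia.
case: (boolP [exists u in C, z u < x u]) => hu; last first.
  move: lt; rewrite ltNge => /negP; apply.
  apply: ler_sum => v vC; rewrite leNgt; apply/negP => hv.
  by move/exists_inP: hu; apply; exists v.
case/exists_inP: hu => u uC lu.
have [w [wS lw Bw]] := exchange Bx Bz (subsetP CS u uC) lu.
have wC : w \notin C.
  apply/negP => wC; move/exists_inP: hw; apply; by exists w.
exact: (loc u w uC wS wC Bw).
Qed.

End Abstract.

Section Charac.
Variables (V E : finType) (ends : E -> V * V) (k : nat) (S : {set V}) (msb : V -> int).

Local Notation h := (hS ends k S msb).
Local Notation Bp := (in_BS_int ends k S msb).

Definition good o := loc_kec ends o S k /\ (forall v, v \notin S -> (indeg ends o v)%:Z = msb v).
Definition goodb o := [forall X : {set V}, (X :&: S != set0) ==> (S :\: X != set0) ==> (k <= rho ends o X)%N]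
  && [forall v, (v \notin S) ==> ((indeg ends o v)%:Z == msb v)].

Lemma goodP o : reflect (good o) (goodb o).
Proof.
apply: (iffP andP) => [[/forallP H1 /forallP H2]|[H1 H2]]; split.
- move=> X a b; have := H1 X; rewrite a b //.
- move=> v vS; have := H2 v; rewrite vS /=; by move/eqP.
- apply/forallP => X; apply/implyP => a; apply/implyP => b; exact: H1.
- apply/forallP => v; apply/implyP => vS; apply/eqP; exact: H2.
Qed.

Definition indvec o := fun v => (indeg ends o v)%:Z.

Lemma sum_indvec o (Z : {set V}) : \sum_(v in Z) indvec o v = (\sum_(v in Z) indeg ends o v)%N%:Z.
Proof. by elim/big_rec2: _ => // i y1 y2 _ ->; rewrite PoszD. Qed.

Lemma sum_splitC (f : V -> int) (A : {set V}) : \sum_v f v = \sum_(v in A) f v + \sum_(v in ~: A) f v.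
Proof.
rewrite !(big_mkcond (fun v => v \in _)) -big_split /=; apply: eq_bigr => v _.
by rewrite inE; case: (v \in A); rewrite ?addr0 ?add0r.
Qed.

Lemma sum_indvec_all o : \sum_v indvec o v = #|E|%:Z.
Proof.
rewrite -(sum_indeg_all ends o); elim/big_rec2: _ => // i y1 y2 _ ->; by rewrite PoszD.
Qed.

Lemma sum_S_indvec o : good o -> \sum_(v in S) indvec o v = #|E|%:Z - \sum_(v in ~: S) msb v.
Proof.
move=> [_ go]; have := sum_splitC (indvec o) S; rewrite sum_indvec_all => ->.
have -> : \sum_(v in ~: S) msb v = \sum_(v in ~: S) indvec o v.
  by apply: eq_bigr => v; rewrite inE => /go.
by rewrite addrK.
Qed.

Lemma hSS_eq o : good o -> \sum_(v in S) indvec o v = h S.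
Proof.
move=> g; rewrite /hS; case: (boolP (S == set0)) => [/eqP e|ne].
  by rewrite {1}e big_set0.
by rewrite eqxx sum_S_indvec.
Qed.

Lemma disj_sum (f : V -> int) (Z X : {set V}) : Z \subset S -> X \subset ~: S ->
  \sum_(v in Z :|: X) f v = \sum_(v in Z) f v + \sum_(v in X) f v.
Proof.
move=> ZS XS; rewrite -sumIU_int.
have -> : Z :&: X = set0.
  apply/setP => v; rewrite !inE; apply/negbTE/negP => /andP [a b].
  by move: (subsetP ZS v a) (subsetP XS v b); rewrite inE => ->.
by rewrite big_set0 add0r.
Qed.

Lemma arith_nec (kk i r sZ sX mX : int) : kk <= r -> sZ + sX = i + r -> sX = mX ->
  kk + i - mX <= sZ.
Proof. move=> *; lia. Qed.

Lemma nec o : good o -> Bp (indvec o).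
Proof.
move=> g; split; first exact: hSS_eq.
move=> Z pZ; case: (boolP (Z == set0)) => [/eqP ->|nZ].
  by rewrite /hS eqxx big_set0.
have ZS : Z \subset S by case/andP: pZ.
have nZS : Z != S by move: pZ; rewrite properEneq => /andP [].
apply: hS_le => // X XS.
have kr : (k <= rho ends o (Z :|: X))%N.
  apply: g.1.
    have -> : (Z :|: X) :&: S = Z.
      rewrite setIUl (setIidPl ZS).
      have -> : X :&: S = set0.
        apply/setP => v; rewrite !inE; apply/negbTE/negP => /andP [a b].
        by move: (subsetP XS v a); rewrite inE b.
      by rewrite setU0.
    exact: nZ.
  apply/set0Pn; move: pZ => /properP [_ [v vS vZ]]; exists v.
  rewrite !inE vS negb_or vZ andbT /=; apply/negP => /(subsetP XS); by rewrite inE vS.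
have e1 := indeg_split ends o (Z :|: X).
have e2 := disj_sum (indvec o) ZS XS.
rewrite !sum_indvec e1 in e2.
have e3 : \sum_(v in X) indvec o v = \sum_(v in X) msb v.
  apply: eq_bigr => v /(subsetP XS); rewrite inE; exact: g.2.
rewrite sum_indvec in e3.
rewrite sum_indvec.
apply: (arith_nec (r := (rho ends o (Z :|: X))%:Z) _ _ e3).
  by rewrite lez_nat.
by rewrite -e2 PoszD.
Qed.


Lemma arith_sep (kk i mX hZ sZ sY sX : int) :
  kk + i - mX <= hZ -> hZ <= sZ -> sY = sZ + sX -> sX = mX -> kk + i <= sY.
Proof. move=> *; lia. Qed.

Lemma sep_bound m (Y : {set V}) : Bp m -> (forall v, v \notin S -> m v = msb v) ->
  Y :&: S != set0 -> S :\: Y != set0 -> k%:Z + (iG ends Y)%:Z <= \sum_(v in Y) m v.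
Proof.
move=> [_ Bm] off nY1 nY2.
have ZS : Y :&: S \subset S by apply: subsetIr.
have XS : Y :\: S \subset ~: S.
  by apply/subsetP => v; rewrite !inE => /andP [a _].
have pZ : Y :&: S \proper S.
  rewrite properEneq ZS andbT; apply: contraNneq nY2 => e; apply/eqP/setP => v; rewrite !inE.
  apply/negbTE/negP => /andP [nv vS]; have : v \in Y :&: S by rewrite e.
  by rewrite inE (negbTE nv).
have nZS : Y :&: S != S by move: pZ; rewrite properEneq => /andP [].
have eY : (Y :&: S) :|: (Y :\: S) = Y by rewrite setID.
have l := le_hS ends k msb nY1 nZS XS; rewrite eY in l.
have b := Bm _ pZ.
have sY := disj_sum m ZS XS; rewrite eY in sY.
have sX : \sum_(v in Y :\: S) m v = \sum_(v in Y :\: S) msb v.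
  by apply: eq_bigr => v /(subsetP XS); rewrite inE => /off.
exact: (arith_sep l b sY sX).
Qed.

Lemma suf o0 m : good o0 -> Bp m -> (forall v, v \notin S -> m v = msb v) ->
  exists o, good o /\ forall v, m v = indvec o v.
Proof.
move=> g0 Bm off.
have eS : \sum_(v in S) m v = \sum_(v in S) indvec o0 v by rewrite Bm.1 hSS_eq.
have offo : forall v, v \notin S -> m v = indvec o0 v.
  by move=> v vS; rewrite off // /indvec g0.2.
have eC : \sum_(v in ~: S) m v = \sum_(v in ~: S) indvec o0 v.
  by apply: eq_bigr => v; rewrite inE => /offo.
have hsum : \sum_v m v = #|E|%:Z.
  by rewrite (sum_splitC m S) eS eC -sum_splitC sum_indvec_all.
have eqY : forall Y : {set V}, \sum_(v in Y :&: S) m v = \sum_(v in Y :&: S) indvec o0 v ->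
    (iG ends Y)%:Z <= \sum_(v in Y) m v.
  move=> Y e; rewrite (big_setID S) /= e.
  have -> : \sum_(v in Y :\: S) m v = \sum_(v in Y :\: S) indvec o0 v.
    by apply: eq_bigr => v; rewrite inE => /andP [/offo].
  rewrite -big_setID sum_indvec indeg_split lez_nat; exact: leq_addr.
have hY : forall Y, (iG ends Y)%:Z <= \sum_(v in Y) m v.
  move=> Y; case: (boolP (Y :&: S != set0)) => n1.
    case: (boolP (S :\: Y != set0)) => n2.
      have := sep_bound Bm off n1 n2; apply: le_trans; by rewrite lerDr.
    apply: eqY; move: n2; rewrite negbK setD_eq0 => SY.
    by rewrite (setIidPr SY).
  apply: eqY; move: n1; rewrite negbK => /eqP ->; by rewrite !big_set0.
have [o ho] := hakimi hsum hY.
exists o; split; last by move=> v; rewrite /indvec ho.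
split; last by move=> v vS; rewrite ho off.
move=> X a b; have := sep_bound Bm off a b.
have -> : \sum_(v in X) m v = \sum_(v in X) indvec o v by apply: eq_bigr => v _; rewrite /indvec ho.
rewrite sum_indvec indeg_split PoszD.
move: (iG ends X) (rho ends o X) => i r; rewrite -(lez_nat k r); move=> *; lia.
Qed.

End Charac.

Lemma arith_m1 (a b : nat) : a%:Z = b%:Z - true%:R -> (b <= a)%N -> False.
Proof. move=> *; lia. Qed.

Lemma arith_off (a b c d f : int) : b <= a -> f = d + b -> f = c + a -> c <= d.
Proof. move=> *; lia. Qed.

Section Final.
Variables (V E : finType) (ends : E -> V * V) (k : nat) (S : {set V}) (msb : V -> int).
Variables (o0 : {ffun E -> bool}) (go0 : goodb ends k S msb o0).

Local Notation h := (hS ends k S msb).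
Local Notation Bp := (in_BS_int ends k S msb).
Local Notation gb := (goodb ends k S msb).
Local Notation iv := (indvec ends).

Definition qo (Z : {set V}) := [arg min_(o < o0 | gb o) (\sum_(v in Z) indeg ends o v)%N].
Definition q (Z : {set V}) := (\sum_(v in Z) indeg ends (qo Z) v)%N.

Lemma qo_good (Z : {set V}) : gb (qo Z).
Proof. by rewrite /qo; case: arg_minnP. Qed.

Lemma q_min (Z : {set V}) o : gb o -> (q Z <= \sum_(v in Z) indeg ends o v)%N.
Proof. by rewrite /q /qo; case: arg_minnP => // o' _ H; apply: H. Qed.

Lemma Bp_ext m m' : (forall v, m v = m' v) -> Bp m -> Bp m'.
Proof.
move=> e [h1 h2]; have es : forall Z : {set V}, \sum_(v in Z) m v = \sum_(v in Z) m' v.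
  by move=> Z; apply: eq_bigr => v _; rewrite e.
split; first by rewrite -es.
by move=> Z pZ; rewrite -es; apply: h2.
Qed.

Lemma chain (A B : {set V}) : A \subset B -> exists o, [/\ gb o,
  (\sum_(v in A) indeg ends o v = q A)%N & (\sum_(v in B) indeg ends o v = q B)%N].
Proof.
move=> AB.
pose P := fun o => gb o && (\sum_(v in A) indeg ends o v == q A)%N.
have P0 : P (qo A) by rewrite /P qo_good eqxx.
pose o2 := [arg min_(o < qo A | P o) (\sum_(v in B) indeg ends o v)%N].
have [g2 e2 m2] : [/\ gb o2, (\sum_(v in A) indeg ends o2 v = q A)%N &
    forall o, P o -> (\sum_(v in B) indeg ends o2 v <= \sum_(v in B) indeg ends o v)%N].
  rewrite /o2; case: arg_minnP => // o' /andP [g /eqP e] H; by split.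
exists o2; split => //.
apply/eqP; rewrite eqn_leq; apply/andP; split; last exact: (@q_min B o2 g2).
have gg2 := elimT (goodP ends k S msb o2) g2.
have gB := elimT (goodP ends k S msb (qo B)) (qo_good B).
have loc : forall u w, u \in B :&: S -> w \in S -> w \notin B :&: S -> ~ Bp (mv (iv o2) u w).
  move=> u w uC wS wC Bmv.
  have uS : u \in S by move: uC; rewrite inE => /andP [].
  have uB : u \in B by move: uC; rewrite inE => /andP [].
  have wB : w \notin B by move: wC; rewrite inE wS andbT.
  have wA : w \notin A by apply: contra wB; apply: (subsetP AB).
  have off : forall v, v \notin S -> mv (iv o2) u w v = msb v.
    move=> v vS; rewrite /mv.
    have -> : (v == u) = false by apply/negbTE; apply: contraNneq vS => ->.
    have -> : (v == w) = false by apply/negbTE; apply: contraNneq vS => ->.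
    by rewrite subr0 addr0; apply: gg2.2.
  have [o' [g' e']] := suf gg2 Bmv off.
  have g'b := introT (goodP ends k S msb o') g'.
  have sA := sum_mv (iv o2) u w A; have sB := sum_mv (iv o2) u w B.
  have eA : \sum_(v in A) mv (iv o2) u w v = \sum_(v in A) iv o' v by apply: eq_bigr => v _; rewrite e'.
  have eB : \sum_(v in B) mv (iv o2) u w v = \sum_(v in B) iv o' v by apply: eq_bigr => v _; rewrite e'.
  rewrite eA !sum_indvec e2 (negbTE wA) addr0 in sA.
  rewrite eB !sum_indvec uB (negbTE wB) addr0 in sB.
  case: (boolP (u \in A)) => uA.
    have := q_min A g'b; rewrite uA in sA.
    exact: arith_m1 sA.
  rewrite (negbTE uA) subr0 in sA.
  have Po' : P o' by rewrite /P g'b; apply/eqP; case: sA.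
  have := m2 o' Po'.
  exact: arith_m1 sB.
have lg := local_global (subsetIr B S) (nec gg2) loc (nec gB).
have split : forall o, good ends k S msb o -> \sum_(v in B) iv o v =
    \sum_(v in B :&: S) iv o v + \sum_(v in B :\: S) msb v.
  move=> o go; rewrite (big_setID S) /=; congr (_ + _); apply: eq_bigr => v.
  by rewrite inE => /andP [vS _]; apply: go.2.
rewrite -lez_nat /q -!sum_indvec (split _ gg2) (split _ gB) lerD2r //.
Qed.

Lemma q_super X Y : (q X + q Y <= q (X :&: Y) + q (X :|: Y))%N.
Proof.
have sub : X :&: Y \subset X :|: Y by apply: subset_trans (subsetIl X Y) (subsetUl X Y).
have [o [g e1 e2]] := chain sub.
rewrite -e1 -e2 sumIU_nat; apply: leq_add; exact: q_min.
Qed.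

Definition pfun (Z : {set V}) : option int := Some (q Z)%:Z.

Lemma pfun_fs : fully_supermodular pfun.
Proof.
split.
- by rewrite /pfun /q big_set0.
- by [].
- move=> X Y a b [<-] [<-]; exists (q (X :&: Y))%:Z, (q (X :|: Y))%:Z; split => //.
  rewrite -!PoszD lez_nat; exact: q_super.
Qed.

Lemma q_setT : q setT = #|E|.
Proof.
rewrite /q -(sum_indeg_all ends (qo setT)); apply: eq_bigl => v; by rewrite inE.
Qed.

Lemma char_iff m : indeg_vectors ends k S msb m <-> (Bp m /\ forall v, v \notin S -> m v = msb v).
Proof.
split.
  move=> [o [lk off hm]]; have g : good ends k S msb o by split.
  split; last by move=> v vS; rewrite hm off.
  apply: Bp_ext (nec g) => v; by rewrite hm.
move=> [Bm off].
have g0 := elimT (goodP ends k S msb o0) go0.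
have [o [[lk offo] e]] := suf g0 Bm off.
by exists o; split.
Qed.

Lemma base_iff m : indeg_vectors ends k S msb m <-> base_int_points pfun m.
Proof.
split.
  move=> [o [lk off hm]]; have g : good ends k S msb o by split.
  have gb' := introT (goodP ends k S msb o) g.
  have es : forall Z : {set V}, \sum_(v in Z) m v = \sum_(v in Z) iv o v.
    by move=> Z; apply: eq_bigr => v _; rewrite hm.
  split.
    rewrite /pfun q_setT; congr Some.
    have -> : \sum_(t in V) m t = \sum_t m t by [].
    rewrite -(sum_indvec_all ends o); apply: eq_bigr => v _; by rewrite hm.
  move=> Z a [<-]; rewrite es sum_indvec lez_nat; exact: q_min.
move=> [pT pZ].
have sx : \sum_v m v = #|E|%:Z.
  move: pT; rewrite /pfun q_setT => -[->]; by [].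
have lb : forall Z, (q Z)%:Z <= \sum_(v in Z) m v by move=> Z; apply: pZ.
have gq : forall Z, good ends k S msb (qo Z) by move=> Z; apply/goodP; apply: qo_good.
have offm : forall v, v \notin S -> m v = msb v.
  move=> v vS.
  have l1 := lb [set v]; rewrite /q big_set1 (gq _).2 // big_set1 in l1.
  have l2 := lb (~: [set v]); rewrite /q -sum_indvec in l2.
  have s1 := sum_splitC (iv (qo (~: [set v]))) [set v].
  have s2 := sum_splitC m [set v].
  rewrite sum_indvec_all big_set1 /indvec (gq _).2 // in s1.
  rewrite sx big_set1 in s2.
  apply/eqP; rewrite eq_le l1 andbT.
  exact: arith_off l2 s1 s2.
apply/char_iff; split => //; split.
  have e1 := hSS_eq (gq setT); rewrite (sum_S_indvec (gq setT)) in e1.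
  rewrite -e1; move: sx; rewrite (sum_splitC m S).
  have -> : \sum_(v in ~: S) m v = \sum_(v in ~: S) msb v.
    by apply: eq_bigr => v; rewrite inE => /offm.
  by move=> <-; rewrite addrK.
move=> Z pZ'; apply: le_trans (lb Z).
have := (nec (gq Z)).2 Z pZ'; by rewrite sum_indvec.
Qed.

End Final.

Theorem theorem6p9 (V E : finType) (ends : E -> V * V) (k : nat)
    (S : {set V}) (msb : V -> int) :
  (0 < k)%N ->
  (exists m, indeg_vectors ends k S msb m) ->
  Mconvex (indeg_vectors ends k S msb) /\
  (forall m : V -> int, indeg_vectors ends k S msb m <->
     (in_BS_int ends k S msb m /\ forall v, v \notin S -> m v = msb v)).
Proof.
move=> _ [m0 [o0 [lk0 off0 _]]].
have g0 : good ends k S msb o0 by split.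
have gb0 := introT (goodP ends k S msb o0) g0.
split.
  exists (pfun ends k S msb o0); split; first exact: pfun_fs.
  move=> x; exact: base_iff.
move=> m; exact: (@char_iff _ _ ends k S msb o0 gb0 m).
Qed.
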